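(* Let $K\ge 2$ and let $M,N,d$ be positive integers with $d\le\min(M,N)$. The symmetric system $(M\times N,d)^K$ is proper if and only if $N_v\ge N_e$, where $N_v=Kd(M+N-2d)$ and $N_e=K(K-1)d^2$; equivalently, it is proper if and only if \[ M+N-(K+1)d\ge 0 . \]
   Context: $(M\times N,d)^K$ denotes the $K$-user system $\prod_{k=1}^K(M^{[k]}\times N^{[k]},d^{[k]})$ with $M^{[k]}=M$, $N^{[k]}=N$, $d^{[k]}=d$ for all $k$. For a general $K$-user system $\prod_{k=1}^K(M^{[k]}\times N^{[k]},d^{[k]})$ (transmitter $k$ has $M^{[k]}$ antennas, receiver $k$ has $N^{[k]}$, user $k$ demands $d^{[k]}$ degrees of freedom), associate abstract variables: for each transmitter $j$ and $n\in\{1,\dots,d^{[j]}\}$, the $M^{[j]}-d^{[j]}$ variables $x^{[j]}_{n,1},\dots,x^{[j]}_{n,M^{[j]}-d^{[j]}}$; for each receiver $k$ and $m\in\{1,\dots,d^{[k]}\}$, the $N^{[k]}-d^{[k]}$ variables $y^{[k]}_{m,1},\dots,y^{[k]}_{m,N^{[k]}-d^{[k]}}$. The equations are the symbols $E^{mn}_{kj}$ for $j\ne k$, $m\le d^{[k]}$, $n\le d^{[j]}$ (standing for $\mathbf u^{[k]\dagger}_m\mathbf H^{[kj]}\mathbf v^{[j]}_n=0$); $\mathcal E$ is the set of all of them, and $\mathrm{var}(E^{mn}_{kj})=\{x^{[j]}_{n,i}\}_{i}\cup\{y^{[k]}_{m,i}\}_{i}$. The system is proper if for every $S\subseteq\mathcal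 E$, $|S|\le\left|\bigcup_{E\in S}\mathrm{var}(E)\right|$, and improper otherwise. $N_v$ is the total number of variables, $\sum_k d^{[k]}(M^{[k]}+N^{[k]}-2d^{[k]})$, and $N_e=|\mathcal E|=\sum_{k\ne j}d^{[k]}d^{[j]}$. *)

(* Defs.v *)
From mathcomp Require Import all_boot.
Set Implicit Arguments. Unset Strict Implicit. Unset Printing Implicit Defensive.

(* A general K-user MIMO interference system prod_k (M k x N k, d k):
   users are indexed by 'I_K; M k, N k, d k are antennas at transmitter k,
   antennas at receiver k, and demanded degrees of freedom of user k. *)

Section System.
Variables (K : nat) (M N d : 'I_K -> nat).

(* A common bound for all stream / variable indices. *)
Definition bnd : nat := (\max_(k < K) (M k + N k + d k)).+1.

(* Equation symbols E^{mn}_{kj}, encoded as (k, j, m, n). *)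
Definition eqn := ('I_K * 'I_K * 'I_bnd * 'I_bnd)%type.

Definition is_eqn (E : eqn) : bool :=
  let: (k, j, m, n) := E in [&& k != j, (m < d k)%N & (n < d j)%N].

Definition eqns : {set eqn} := [set E | is_eqn E].

(* Variables: (false, j, n, i) stands for x^{[j]}_{n,i} (n < d j, i < M j - d j),
   (true, k, m, i) stands for y^{[k]}_{m,i} (m < d k, i < N k - d k). *)
Definition var := (bool * 'I_K * 'I_bnd * 'I_bnd)%type.

Definition is_var (v : var) : bool :=
  let: (b, k, n, i) := v in
  if b then (n < d k)%N && (i < N k - d k)%N
  else (n < d k)%N && (i < M k - d k)%N.

Definition varE (E : eqn) : {set var} :=
  let: (k, j, m, n) := E in
  [set v : var | [|| [&& v.1.1.1 == false, v.1.1.2 == j, v.1.2 == n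
                        & (nat_of_ord v.2 < M j - d j)%N]
                   | [&& v.1.1.1 == true, v.1.1.2 == k, v.1.2 == m
                        & (nat_of_ord v.2 < N k - d k)%N]]].

Definition proper : Prop :=
  forall S : {set eqn}, S \subset eqns ->
    (#|S| <= #|\bigcup_(E in S) varE E|)%N.

Definition Nv : nat := \sum_(k < K) d k * (M k + N k - 2 * d k).
Definition Ne : nat := \sum_(k < K) \sum_(j < K | j != k) d k * d j.

End System.

Definition sym_proper (K M N d : nat) : Prop :=
  @proper K (fun _ => M) (fun _ => N) (fun _ => d).
Definition sym_Nv (K M N d : nat) : nat :=
  @Nv K (fun _ => M) (fun _ => N) (fun _ => d).
Definition sym_Ne (K M N d : nat) : nat :=
  @Ne K (fun _ => d).

(* Main.v *)
Require Import Defs.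
From Stdlib Require Import Lia Arith.
From mathcomp Require Import all_boot.
Set Implicit Arguments. Unset Strict Implicit. Unset Printing Implicit Defensive.

Lemma mem_fib (T1 T2 T3 T4 : finType) (c c' : T1) (k k' : T2) (n n' : T3) (i : T4)
  (A : {set T4}) :
  ((c, k, n, i) \in (fun x => (c', k', n', x)) @: A) = [&& c == c', k == k', n == n' & i \in A].
Proof.
apply/imsetP/idP.
  by case=> x xA [-> -> -> ->]; rewrite !eqxx.
by case/and4P=> /eqP-> /eqP-> /eqP-> iA; exists i.
Qed.

Lemma card_fib (T1 T2 T3 T4 : finType) (c' : T1) (k' : T2) (n' : T3) (A : {set T4}) :
  #|(fun x => (c', k', n', x)) @: A| = #|A|.
Proof. by apply: card_imset => x y [] . Qed.

Lemma mem_imA (T1 T2 T3 T4 : finType) (k' : T1) (j' : T2) (m' : T3) (n' : T4) j n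
  (A : {set T1 * T3}) :
  ((k', j', m', n') \in (fun p : T1 * T3 => (p.1, j, p.2, n)) @: A) =
  [&& j' == j, n' == n & (k', m') \in A].
Proof.
apply/imsetP/idP.
  by case=> -[p1 p2] pA [-> -> -> ->]; rewrite !eqxx.
by case/and3P => /eqP-> /eqP-> H; exists (k', m').
Qed.

Lemma mem_imB (T1 T2 T3 T4 : finType) (k' : T1) (j' : T2) (m' : T3) (n' : T4) k m
  (A : {set T2 * T4}) :
  ((k', j', m', n') \in (fun p : T2 * T4 => (k, p.1, m, p.2)) @: A) =
  [&& k' == k, m' == m & (j', n') \in A].
Proof.
apply/imsetP/idP.
  by case=> -[p1 p2] pA [-> -> -> ->]; rewrite !eqxx.
by case/and3P => /eqP-> /eqP-> H; exists (j', n').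
Qed.

Lemma sum_ind (T : finType) (S : {set T}) (P : pred T) :
  \sum_(x in S) (P x : nat) = #|[set x in S | P x]|.
Proof.
rewrite -sum1_card [RHS](eq_bigl (fun x => (x \in S) && P x)); last by move=> x; rewrite inE.
rewrite big_mkcondr /=; apply: eq_bigr => x _; by case: (P x).
Qed.

Lemma sum_ind_sub (T : finType) (A V : {set T}) : A \subset V ->
  \sum_(x in V) (x \in A : nat) = #|A|.
Proof.
move=> sAV; rewrite sum_ind; apply: eq_card => x; rewrite !inE.
by case xA: (x \in A); rewrite ?andbF // (subsetP sAV).
Qed.

Lemma card_lt n c : c <= n -> #|[set m : 'I_n | m < c]| = c.
Proof.
move=> h; rewrite -sum1_card (eq_bigl (fun i : 'I_n => i < c)); last by move=> i; rewrite inE.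
by rewrite (big_ord_narrow h) sum1_card card_ord.
Qed.

Section Sym.
Variables K M N d : nat.
Hypotheses (hK : 2 <= K) (hd : 0 < d) (hdM : d <= M) (hdN : d <= N).
Local Notation Mf := (fun _ : 'I_K => M).
Local Notation Nf := (fun _ : 'I_K => N).
Local Notation df := (fun _ : 'I_K => d).
Local Notation B := (bnd Mf Nf df).
Local Notation a := (M - d).
Local Notation b := (N - d).

Let k0 : 'I_K := Ordinal (ltn_trans (isT : 0 < 1) hK).
Let k1 : 'I_K := Ordinal hK.

Lemma bnd_gt : M + N + d < B.
Proof. rewrite /bnd ltnS; exact: (leq_bigmax (F := fun k : 'I_K => M + N + d) k0). Qed.

Lemma varE_card (E : Defs.eqn Mf Nf df) : #|varE E| = a + b.
Proof.
case: E => [[[k j] m] n].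
have ha : a <= B.
  apply: leq_trans (leq_subr _ _) _; apply: ltnW; apply: leq_trans bnd_gt.
  by rewrite ltnS -addnA leq_addr.
have hb : b <= B.
  apply: leq_trans (leq_subr _ _) _; apply: ltnW; apply: leq_trans bnd_gt.
  rewrite ltnS; apply: (leq_trans (leq_addl M N)); exact: leq_addr.
have -> : varE (k, j, m, n) =
  ((fun x => (false, j, n, x)) @: [set i : 'I_B | i < a]) :|:
  ((fun x => (true, k, m, x)) @: [set i : 'I_B | i < b]).
  apply/setP => -[[[bb kk] nn] ii]; rewrite !inE !mem_fib !inE /=.
  by case: bb.
rewrite cardsU !card_fib !card_lt //.
suff -> : #|((fun x => (false, j, n, x)) @: [set i : 'I_B | i < a]) :&:
  ((fun x => (true, k, m, x)) @: [set i : 'I_B | i < b])| = 0 by rewrite subn0.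
apply/eqP; rewrite cards_eq0; apply/eqP/setP => -[[[bb kk] nn] ii].
by rewrite !inE !mem_fib; case: bb; rewrite /= ?andbF.
Qed.

Definition PP (j : 'I_K) : {set 'I_K * 'I_B} := setX [set~ j] [set m : 'I_B | m < d].

Lemma dB : d <= B.
Proof. apply: ltnW; apply: leq_trans bnd_gt; rewrite ltnS; exact: leq_addl. Qed.

Lemma card_PP j : #|PP j| = (K - 1) * d.
Proof. by rewrite /PP cardsX cardsC1 card_ord subn1 card_lt // dB. Qed.

Lemma deg (E0 : Defs.eqn Mf Nf df) v : E0 \in eqns Mf Nf df -> v \in varE E0 ->
  #|[set E in eqns Mf Nf df | v \in varE E]| = (K - 1) * d.
Proof.
case: E0 => [[[k0' j0] m0] n0]; case: v => [[[bb kv] nv] iv].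
rewrite !inE /= => /and3P[_ hm0 hn0].
case: bb => /orP[] /and4P[/eqP e0 /eqP-> /eqP-> hi] //.
- rewrite -(card_PP k0') -(card_imset _ (f := fun p : 'I_K * 'I_B => (k0', p.1, m0, p.2))); last first.
    by move=> [x1 x2] [y1 y2] [-> ->].
  apply: eq_card => -[[[k' j'] m'] n']; rewrite !inE mem_imB /PP !inE /=.
  rewrite hi andbT (eq_sym k0') (eq_sym m0) (eq_sym j'); case: (k' =P k0') => [->|] /=; last by rewrite !andbF.
  case: (m' =P m0) => [->|] /=; last by rewrite andbF.
  by rewrite hm0 andbT.
- rewrite -(card_PP j0) -(card_imset _ (f := fun p : 'I_K * 'I_B => (p.1, j0, p.2, n0))); last first.
    by move=> [x1 x2] [y1 y2] [-> ->].
  apply: eq_card => -[[[k' j'] m'] n']; rewrite !inE mem_imA /PP !inE /=.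
  rewrite orbF hi andbT (eq_sym j0) (eq_sym n0); case: (j' =P j0) => [->|] /=; last by rewrite !andbF.
  case: (n' =P n0) => [->|] /=; last by rewrite !andbF.
  by rewrite hn0 !andbT.
Qed.

Lemma count_id (S : {set Defs.eqn Mf Nf df}) :
  #|S| * (a + b) =
  \sum_(v in \bigcup_(E in S) varE E) #|[set E in S | v \in varE E]|.
Proof.
set V := \bigcup_(E in S) varE E.
rewrite -sum_nat_const (eq_bigr (fun E => \sum_(v in V) (v \in varE E : nat))); last first.
  move=> E ES; rewrite sum_ind_sub ?varE_card //; exact: bigcup_sup.
rewrite exchange_big /=; apply: eq_bigr => v _; exact: sum_ind.
Qed.

Lemma suff_part : (K - 1) * d <= a + b -> Defs.proper Mf Nf df.
Proof.
move=> h S SE; have e := count_id S.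
set V := \bigcup_(E in S) varE E.
have le : \sum_(v in V) #|[set E in S | v \in varE E]| <= #|V| * ((K - 1) * d).
  rewrite -sum_nat_const; apply: leq_sum => v /bigcupP[E ES vE].
  rewrite -(deg (subsetP SE _ ES) vE); apply: subset_leq_card.
  apply/subsetP => E'; rewrite !inE => /andP[/(subsetP SE)]; rewrite inE => -> -> //.
have pos : 0 < a + b.
  apply: leq_trans h; rewrite muln_gt0 hd andbT subn_gt0; exact: hK.
rewrite -(leq_pmul2r pos) e; apply: (leq_trans le); exact: leq_mul.
Qed.

Lemma nec_part : Defs.proper Mf Nf df -> (K - 1) * d <= a + b.
Proof.
move=> P; have hS := P _ (subxx _); have := count_id (eqns Mf Nf df).
rewrite (eq_bigr (fun _ => (K - 1) * d)); last first.
  by move=> v /bigcupP[E ES vE]; apply: deg ES vE.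
rewrite sum_nat_const => e.
have B0 : 0 < B by apply: leq_ltn_trans (leq0n _) bnd_gt.
have pos : 0 < #|eqns Mf Nf df|.
  apply/card_gt0P; exists (k0, k1, Ordinal B0, Ordinal B0); by rewrite !inE /= hd.
rewrite -(leq_pmul2l pos) e; exact: leq_mul.
Qed.

Lemma sym_iff : Defs.proper Mf Nf df <-> (K - 1) * d <= a + b.
Proof. split; [exact: nec_part | exact: suff_part]. Qed.
End Sym.

Lemma arith K M N d : 2<=K -> d<=M -> d<=N -> ((K+1)*d <= M+N) = ((K-1)*d <= (M-d)+(N-d)).
Proof.
move=> /leP h1 /leP h2 /leP h3. apply/idP/idP => /leP h; apply/leP; rewrite -!multE -!plusE -!minusE in h *; nia.
Qed.

Theorem theorem2 (K M N d : nat) :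
  (2 <= K)%N -> (0 < M)%N -> (0 < N)%N -> (0 < d)%N -> (d <= minn M N)%N ->
  [/\ sym_Nv K M N d = K * d * (M + N - 2 * d),
      sym_Ne K M N d = K * (K - 1) * d ^ 2,
      (sym_proper K M N d <-> (sym_Ne K M N d <= sym_Nv K M N d)%N)
    & (sym_proper K M N d <-> ((K + 1) * d <= M + N)%N)].
Proof.
move=> hK hM hN hd; rewrite leq_min => /andP[hdM hdN].
have eNv : sym_Nv K M N d = K * d * (M + N - 2 * d).
  by rewrite /sym_Nv /Nv sum_nat_const card_ord mulnA.
have eNe : sym_Ne K M N d = K * (K - 1) * d ^ 2.
  rewrite /sym_Ne /Ne (eq_bigr (fun _ => (K - 1) * (d * d))); last first.
    move=> k _; rewrite sum_nat_cond_const; congr (_ * _).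
    transitivity #|[set~ k]|; last by rewrite cardsC1 card_ord subn1.
    by apply: eq_card => x; rewrite !inE.
  rewrite sum_nat_const card_ord (expnS d 1) expn1 -!multE -!minusE; ring.
have Hp : sym_proper K M N d <-> _ := sym_iff M N hK hd.
split => //.
- rewrite eNv eNe.
  suff -> : (K * (K - 1) * d ^ 2 <= K * d * (M + N - 2 * d)) = ((K - 1) * d <= M - d + (N - d)) by [].
  have -> : K * (K - 1) * d ^ 2 = (K * d) * ((K - 1) * d).
    by rewrite (expnS d 1) expn1 -!multE -!minusE; ring.
  have -> : K * d * (M + N - 2 * d) = (K * d) * ((M - d) + (N - d)).
    congr (_ * _); apply/eqP; rewrite eqn_leq; apply/andP; split; apply/leP;
      move/leP: hdM; move/leP: hdN; rewrite -!multE -!plusE -!minusE; lia.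
  rewrite leq_pmul2l // muln_gt0 hd andbT; exact: (leq_trans _ hK).
- by rewrite arith.
Qed.
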